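(* Let $I \subset S=K[x_1,\ldots,x_n]$ be a monomial ideal ($K$ a field). Then the following are equivalent: (1) $I$ is componentwise polymatroidal. (2) For all monomials $u,v \in I$ with $\deg(u)\leq \deg(v)$ and $u \nmid v$, and for every $i$ with $\deg_{x_i}(v) > \deg_{x_i}(u)$, there exists $j$ with $\deg_{x_j}(v)< \deg_{x_j}(u)$ and $x_j(v/x_i) \in I$.
   Context: For a monomial $u$, $\deg_{x_i}(u)$ is the exponent of $x_i$ in $u$. $G(I)$ denotes the minimal set of monomial generators of a monomial ideal $I$. A monomial ideal $I$ generated in a single degree is polymatroidal if for all $u,v\in G(I)$ and all $i$ with $\deg_{x_i}(u)>\deg_{x_i}(v)$ there exists $j$ with $\deg_{x_j}(u)<\deg_{x_j}(v)$ and $x_j(u/x_i)\in I$. For a monomial ideal $I$, its $j$-th graded component $I_{\langle j\rangle}$ is the ideal generated by all monomials of degree $j$ in $I$. $I$ is componentwise polymatroidal if $I_{\langle j\rangle}$ is polymatroidal for every $j$ (for which it is nonzero). *)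

(* Defs.v *)
(* Monomials of S = K[x_1..x_n] are identified with their
   exponent vectors; a monomial ideal is identified with its set of monomials,
   i.e. a set of exponent vectors closed under multiplication by monomials. *)
From mathcomp Require Import all_boot.
Set Implicit Arguments. Unset Strict Implicit. Unset Printing Implicit Defensive.

(* the monomial x^a, with a : exponent vector; deg_{x_i}(u) = u i *)
Definition monom (n : nat) := {ffun 'I_n -> nat}.

Definition mdeg n (u : monom n) : nat := \sum_(i < n) u i.

Definition mdvd n (u v : monom n) : Prop := forall i, u i <= v i.

(* x_j * (u / x_i)  (used only when deg_{x_i}(u) > 0) *)
Definition mexch n (u : monom n) (i j : 'I_n) : monom n :=
  [ffun k => u k - (k == i) + (k == j)].

Definition monomial_ideal n (I : monom n -> Prop) : Prop :=
  forall u v, I u -> mdvd u v -> I v.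

Definition mingens n (I : monom n -> Prop) (u : monom n) : Prop :=
  I u /\ forall v, I v -> mdvd v u -> v = u.

Definition single_degree n (I : monom n -> Prop) : Prop :=
  exists d, forall u, mingens I u -> mdeg u = d.

Definition polymatroidal n (I : monom n -> Prop) : Prop :=
  single_degree I /\
  forall u v, mingens I u -> mingens I v ->
  forall i, v i < u i ->
  exists j, u j < v j /\ I (mexch u i j).

Definition component n (I : monom n -> Prop) (d : nat) (w : monom n) : Prop :=
  exists u, I u /\ mdeg u = d /\ mdvd u w.

Definition componentwise_polymatroidal n (I : monom n -> Prop) : Prop :=
  forall d, (exists w, component I d w) -> polymatroidal (component I d).

(* Main.v *)
Require Import Defs.
From mathcomp Require Import all_boot.
From mathcomp Require Import zify.
Set Implicit Arguments. Unset Strict Implicit. Unset Printing Implicit Defensive.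

Lemma mdeg_sub1 n (u : monom n) i : 0 < u i ->
  mdeg [ffun k => u k - (k == i)] + 1 = mdeg u.
Proof.
move=> hi; rewrite /mdeg (bigD1 i) //= [RHS](bigD1 i) //= ffunE eqxx /=.
have E : \sum_(k < n | k != i) [ffun k => u k - (k == i)] k =
         \sum_(k < n | k != i) u k.
  by apply: eq_bigr => k hk; rewrite ffunE (negbTE hk) subn0.
by rewrite E /= addnAC subnK.
Qed.

Lemma mdeg_add1 n (u : monom n) j :
  mdeg [ffun k => u k + (k == j)] = mdeg u + 1.
Proof.
rewrite /mdeg (bigD1 j) //= [in RHS](bigD1 j) //= ffunE eqxx /=.
have E : \sum_(k < n | k != j) [ffun k => u k + (k == j)] k =
         \sum_(k < n | k != j) u k.
  by apply: eq_bigr => k hk; rewrite ffunE (negbTE hk) addn0.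
by rewrite E /= addnAC.
Qed.

Lemma mdeg_mexch n (u : monom n) i j : 0 < u i -> mdeg (mexch u i j) = mdeg u.
Proof.
move=> hi.
have -> : mexch u i j = [ffun k => [ffun k => u k - (k == i)] k + (k == j)].
  by apply/ffunP => k; rewrite !ffunE.
by rewrite mdeg_add1 mdeg_sub1.
Qed.

Lemma mdvd_le n (a b : monom n) : mdvd a b -> mdeg a <= mdeg b.
Proof. by move=> h; apply: leq_sum => k _; apply: h. Qed.

Lemma mdvd_lt n (a b : monom n) k : mdvd a b -> a k < b k -> mdeg a < mdeg b.
Proof.
move=> h hk; rewrite /mdeg (bigD1 k) //= [X in _ < X](bigD1 k) //=.
rewrite -addSn; apply: leq_add => //; apply: leq_sum => l _; apply: h.
Qed.

Lemma mdvd_eq n (a b : monom n) : mdvd a b -> mdeg b <= mdeg a -> a = b.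
Proof.
move=> h hd; apply/ffunP => k; apply/eqP; rewrite eqn_leq h /=.
rewrite leqNgt; apply/negP => hk.
by move: (mdvd_lt h hk); rewrite ltnNge hd.
Qed.

Lemma mingens_comp n (I : monom n -> Prop) w :
  monomial_ideal I -> I w -> mingens (component I (mdeg w)) w.
Proof.
move=> hI hw; split; first by exists w; split=> //; split=> // k.
move=> v [x [hx [dx xv]]] vw.
have xw : mdvd x w by move=> k; apply: leq_trans (xv k) (vw k).
have exw := mdvd_eq xw (eq_leq (esym dx)).
subst x; apply/ffunP => k; apply/eqP; rewrite eqn_leq vw xv.
done.
Qed.

Lemma comp_mingens n (I : monom n -> Prop) d x :
  mingens (component I d) x -> I x /\ mdeg x = d.
Proof.
move=> [[u [hu [du ux]]] hmin].
have : u = x by apply: hmin => //; exists u; split=> //; split=> // k.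
by move=> <-.
Qed.

Lemma interp n (a b : monom n) d : mdvd a b -> mdeg a <= d -> d <= mdeg b ->
  exists c : monom n, [/\ mdvd a c, mdvd c b & mdeg c = d].
Proof.
move=> ab h1 h2; have [m hm] : exists m, d - mdeg a = m by eexists.
elim: m a hm ab h1 h2.
  move=> a hm ab h1 h2; exists a; split=> //; last lia.
move=> m IH a hm ab h1 h2.
case: (boolP [exists l, a l < b l]) => [/existsP [l hl]|hne].
  set a' := [ffun k => a k + (k == l)].
  have da' : mdeg a' = mdeg a + 1 by rewrite mdeg_add1.
  have ab' : mdvd a' b.
    move=> k; rewrite /a' ffunE; case: eqP => [->|_]; last by rewrite addn0; apply: ab.
    by rewrite addn1.
  have [c [h3 h4 h5]] := IH a' (ltac:(lia)) ab' (ltac:(lia)) h2.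
  exists c; split=> //.
  move=> k; apply: leq_trans (h3 k); rewrite /a' ffunE; exact: leq_addr.
have ba : mdvd b a.
  move=> k; move/existsPn: hne => /(_ k); by rewrite -leqNgt.
have := mdvd_le ba; lia.
Qed.

Theorem proposition1p2 (n : nat) (I : monom n -> Prop) :
  monomial_ideal I ->
  (componentwise_polymatroidal I <->
   (forall u v : monom n, I u -> I v -> mdeg u <= mdeg v -> ~ mdvd u v ->
    forall i : 'I_n, u i < v i ->
    exists j : 'I_n, v j < u j /\ I (mexch v i j))).
Proof.
move=> hI; split.
- move=> hcp u v hu hv duv nuv i hi.
  have [kk hkk] : exists kk, v kk < u kk.
    case: (boolP [exists l, v l < u l]) => [/existsP [l hl]|hne]; first by exists l.
    exfalso; apply: nuv => k; move/existsPn: hne => /(_ k); by rewrite -leqNgt.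
  set mx := [ffun k => maxn (u k) (v k)].
  set b := [ffun k => mx k - (k == i)].
  have vmx : mdvd v mx by move=> k; rewrite ffunE leq_maxr.
  have dvm : mdeg v < mdeg mx.
    by apply: (mdvd_lt (k := kk) vmx); rewrite ffunE; apply: leq_trans hkk (leq_maxl _ _).
  have mxi : 0 < mx i by rewrite ffunE; apply: leq_trans (leq_maxr _ _); lia.
  have db : mdeg b + 1 = mdeg mx by rewrite mdeg_sub1.
  have ub : mdvd u b.
    move=> k; rewrite !ffunE; case: eqP => [->|_]; last by rewrite subn0 leq_maxl.
    rewrite (maxn_idPr (ltnW hi)); lia.
  have [u' [uu' u'b du']] := interp ub duv (ltac:(lia) : mdeg v <= mdeg b).
  have Iu' : I u' by apply: hI uu'.
  have [_ hp] := hcp (mdeg v) (ex_intro _ v (ex_intro _ v (conj hv (conj erefl (fun k => leqnn _))))).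
  have mv := mingens_comp hI hv.
  have mu' : mingens (component I (mdeg v)) u' by rewrite -du'; apply: mingens_comp.
  have u'i : u' i < v i.
    have := u'b i; rewrite !ffunE eqxx (maxn_idPr (ltnW hi)); lia.
  have [j [hj hc]] := hp v u' mv mu' i u'i.
  exists j; split.
    have := u'b j; rewrite !ffunE; case: (j == i); rewrite /maxn; case: ltnP; lia.
  by move: hc => [x [hx [_ xm]]]; apply: hI xm.
- move=> h2 d [w hw]; split.
    by exists d => x /comp_mingens [].
  move=> u v mu mv i hi.
  have [hu du] := comp_mingens mu; have [hv dv] := comp_mingens mv.
  have nvu : ~ mdvd v u.
    move=> vu; have e := mdvd_eq vu (ltac:(lia) : mdeg u <= mdeg v).
    by move: hi; rewrite e ltnn.
  have [j [hj hIj]] := h2 v u hv hu (ltac:(lia)) nvu i hi.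
  exists j; split=> //.
  exists (mexch u i j); split=> //; split; last by move=> k.
  rewrite mdeg_mexch //; lia.
Qed.
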